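(* Let $(\Omega,\mathcal F,\mathbb P)$ be a probability space and let $\mathcal X$ be an ideal of $L^0$, equipped with a vector topology and the almost-sure order. Let $V_1:\mathbb R^N\to\mathcal X$ be weakly upper semicontinuous, and assume one of the following: (i) $\mathcal X=L^0$ equipped with the topology of convergence in probability; (ii) $\mathcal X$ is order continuous and $V_1$ is nondecreasing (componentwise order on $\mathbb R^N$, almost-sure order on $\mathcal X$). Then $V_1$ is upper semicontinuous.
   Context: $L^0$ is the space of equivalence classes (modulo a.s. equality) of real random variables on $(\Omega,\mathcal F,\mathbb P)$ with the a.s. partial order, $\mathcal X_+$ being the a.s. nonnegative elements. $\mathcal X\subset L^0$ is an ideal if it is a linear subspace that is solid ($X\in\mathcal X$ whenever $|X|\le|Y|$ a.s. for some $Y\in\mathcal X$) and $\max\{X,Y\}\in\mathcal X$ for all $X,Y\in\mathcal X$. $\mathcal X$ is order continuous if for all $(X_n)\subset\mathcal X$ and $X\in\mathcal X$ with $X_n\to X$ a.s. and $\sup_n|X_n|\in\mathcal X$, one has $X_n\to X$ in the topology of $\mathcal X$. $V_1$ is weakly upper semicontinuous if for all $(x_n)\subset\mathbb R^N$, $x\in\mathbb R^N$ with $x_n\to x$, $V_1(x)\ge\limsup_n V_1(x_n)$ a.s. $V_1$ is upper semicontinuous at $x$ if for every neighborhood $\mathcal U$ of $V_1(x)$ there exists a neighborhood $\mathcal V$ of $x$ with $V_1(\mathcal V)\subset\mathcal U-\mathcal X_+$, and upper semicontinuous if this holds at every $x$. *)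

(* Defs.v *)
From HB Require Import structures.
From mathcomp Require Import all_boot all_order all_algebra.
From mathcomp Require Import all_classical all_reals all_analysis.
Set Implicit Arguments. Unset Strict Implicit. Unset Printing Implicit Defensive.
Import Order.TTheory GRing.Theory Num.Theory.
Import numFieldNormedType.Exports.
Local Open Scope classical_set_scope.
Local Open Scope ring_scope.

(* Model of an ideal X of L^0(Omega,F,P) equipped with a vector topology:
   X is a topological vector space over R (topologicalLmodType R: addition and
   scalar multiplication are continuous), and [i : X -> T -> R] sends each
   element (an equivalence class) to a representative measurable function.
   [i] is injective modulo a.s. equality, linear modulo a.s. equality, and its
   image (modulo a.s. equality) is solid and closed under max. *)
Definition L0_ideal d (T : measurableType d) (R : realType)
  (P : probability T R) (X : topologicalLmodType R) (i : X -> T -> R) : Prop :=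
  [/\ (forall x, measurable_fun setT (i x)),
      (forall x y, (i x = i y %[ae P]) -> x = y),
      (forall (a : R) x y,
          (i (a *: x + y) = (fun w => a * i x w + i y w) %[ae P])),
      (forall (f : T -> R) (y : X), measurable_fun setT f ->
          {ae P, forall w, `|f w| <= `|i y w|} ->
          exists x : X, (i x = f %[ae P]))
    & (forall x y : X, exists z : X,
          (i z = (fun w => Num.max (i x w) (i y w)) %[ae P]))].

Definition ae_le d (T : measurableType d) (R : realType)
  (P : probability T R) (X : topologicalLmodType R) (i : X -> T -> R)
  (x y : X) : Prop := {ae P, forall w, i x w <= i y w}.

Definition ae_nonneg d (T : measurableType d) (R : realType)
  (P : probability T R) (X : topologicalLmodType R) (i : X -> T -> R)
  (x : X) : Prop := {ae P, forall w, 0 <= i x w}.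

Definition weakly_usc d (T : measurableType d) (R : realType)
  (P : probability T R) (X : topologicalLmodType R) (i : X -> T -> R)
  (N : nat) (V1 : 'rV[R]_N -> X) : Prop :=
  forall (xs : nat -> 'rV[R]_N) (x : 'rV[R]_N), xs @ \oo --> x ->
    {ae P, forall w,
       (limn_esup (fun n => (i (V1 (xs n)) w)%:E) <= (i (V1 x) w)%:E)%E}.

Definition usc_at d (T : measurableType d) (R : realType)
  (P : probability T R) (X : topologicalLmodType R) (i : X -> T -> R)
  (N : nat) (V1 : 'rV[R]_N -> X) (x : 'rV[R]_N) : Prop :=
  forall U : set X, nbhs (V1 x) U ->
    exists W : set 'rV[R]_N, nbhs x W /\
      forall y, W y -> exists u p : X, [/\ U u, ae_nonneg P i p & V1 y = u - p].

Definition usc d (T : measurableType d) (R : realType)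
  (P : probability T R) (X : topologicalLmodType R) (i : X -> T -> R)
  (N : nat) (V1 : 'rV[R]_N -> X) : Prop :=
  forall x, usc_at P i V1 x.

Definition nondecreasingV d (T : measurableType d) (R : realType)
  (P : probability T R) (X : topologicalLmodType R) (i : X -> T -> R)
  (N : nat) (V1 : 'rV[R]_N -> X) : Prop :=
  forall x y : 'rV[R]_N, (forall j, x ord0 j <= y ord0 j) ->
    ae_le P i (V1 x) (V1 y).

Definition order_continuous d (T : measurableType d) (R : realType)
  (P : probability T R) (X : topologicalLmodType R) (i : X -> T -> R) : Prop :=
  forall (Xs : nat -> X) (x : X),
    {ae P, forall w, (fun n => i (Xs n) w) @ \oo --> i x w} ->
    (exists s : X, {ae P, forall w,
        ereal_sup (range (fun n => (`|i (Xs n) w|)%:E)) = (i s w)%:E}) ->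
    Xs @ \oo --> x.

(* X = L^0 (every measurable function is a.s. equal to some element of X)
   and the topology of X is that of convergence in probability, given by the
   neighborhood base { y | P(|y - x| >= e) < e }, e > 0 (Ky Fan balls). *)
Definition L0_in_probability d (T : measurableType d) (R : realType)
  (P : probability T R) (X : topologicalLmodType R) (i : X -> T -> R) : Prop :=
  (forall f : T -> R, measurable_fun setT f -> exists x : X, (i x = f %[ae P])) /\
  (forall (x : X) (A : set X), nbhs x A <->
     exists e : R, 0 < e /\
       (forall y : X, (P [set w | (e <= `|i y w - i x w|)%R] < e%:E)%E -> A y)).

(* Main.v *)
Require Import Defs.
From HB Require Import structures.
From mathcomp Require Import all_boot all_order all_algebra.
From mathcomp Require Import all_classical all_reals all_analysis.
Import Order.TTheory GRing.Theory Num.Theory.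
Import numFieldNormedType.Exports.
Local Open Scope classical_set_scope.
Local Open Scope ring_scope.
From mathcomp Require Import lra.

Lemma esup_ev {R : realType} {u : nat -> R} {l e : R} : 0 < e ->
  (limn_esup (fun n => (u n)%:E) <= l%:E)%E ->
  exists M, forall n, (M <= n)%N -> u n < l + e.
Proof.
move=> e0 H.
have : (limn_esup (fun n => (u n)%:E) < (l + e)%:E)%E.
  by apply: le_lt_trans H _; rewrite lte_fin ltrDl.
rewrite /limn_esup /limf_esup => /ereal_inf_lt[_ [V VF <-]] Vlt.
case: VF => M _ HM.
exists M => n Mn; rewrite -lte_fin; apply: le_lt_trans Vlt.
by apply: ereal_sup_ubound; exists n => //; exact: HM.
Qed.

Lemma abs_between (R : realType) (L t a : R) : L <= t -> t <= a ->
  `|t| <= Num.max `|L| `|a|.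
Proof.
move=> Lt ta; rewrite le_max; have [t0|t0] := leP 0 t.
  by apply/orP; right; rewrite ger0_norm // ger0_norm ?(le_trans t0).
apply/orP; left; rewrite ltr0_norm // ltr0_norm ?(le_lt_trans Lt) //.
by rewrite lerN2.
Qed.

Lemma ae_set {d} {T : measurableType d} {R : realType} {P : probability T R}
  {Q : T -> Prop} : {ae P, forall w, Q w} ->
  exists N, [/\ measurable N, P N = 0%E & forall w, ~ N w -> Q w].
Proof.
case=> N [mN PN sub]; exists N; split => // w Nw.
apply: contrapT => Qw; exact: Nw (sub w Qw).
Qed.

Lemma aeI {d} {T : measurableType d} {R : realType} {P : probability T R}
  {A B : T -> Prop} : {ae P, forall w, A w} -> {ae P, forall w, B w} ->
  {ae P, forall w, A w /\ B w}.
Proof. move=> a b; exact: (@filterI _ _ (ae_filter_ringOfSetsType P) _ _ a b). Qed.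

Lemma aeS {d} {T : measurableType d} {R : realType} {P : probability T R}
  {A B : T -> Prop} : (forall w, A w -> B w) -> {ae P, forall w, A w} ->
  {ae P, forall w, B w}.
Proof. move=> ab a; exact: (@filterS _ _ (ae_filter_ringOfSetsType P) _ _ ab a). Qed.

Theorem mainTheorem12 (d : measure_display) (T : measurableType d)
  (R : realType) (P : probability T R) (X : topologicalLmodType R)
  (i : X -> T -> R) (N : nat) (V1 : 'rV[R]_N -> X) :
  L0_ideal P i ->
  weakly_usc P i V1 ->
  (L0_in_probability P i \/ (order_continuous P i /\ nondecreasingV P i V1)) ->
  usc P i V1.
Proof.
move=> [imeas iinj ilin isolid imax] Hw Hcase x U HU.
have iabs : forall v : X, exists a : X, {ae P, forall w, i a w = `|i v w|}.
  move=> v.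
  have mv : measurable_fun setT (fun w => `|i v w|).
    exact: measurableT_comp (@measurable_realfun.normr_measurable R setT) (imeas v).
  have hv : {ae P, forall w, `| `|i v w| | <= `|i v w|}.
    by apply: aeW => w; rewrite normr_id.
  have [a ha] := isolid _ v mv hv.
  by exists a; apply: filterS ha => w /(_ I).
have isub : forall u v : X, {ae P, forall w, i (u - v) w = i u w - i v w}.
  move=> u v; have := ilin (-1) v u; rewrite scaleN1r addrC.
  by apply: filterS => w /(_ I) ->; rewrite mulN1r addrC.
have hdec : forall u v : X, ae_le P i v u -> ae_nonneg P i (u - v) /\ v = u - (u - v).
  move=> u v huv; split; last by rewrite opprB addrC subrK.
  rewrite /ae_nonneg; have := @filterI _ _ (ae_filter_ringOfSetsType P) _ _ (isub u v) huv.
  by move=> H; apply: filterS H => w [-> h]; rewrite subr_ge0.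
case: Hcase => [[L0 Hnb]|[Hoc Hmono]].
  have [e [e0 He]] := (Hnb (V1 x) U).1 HU.
  pose A y := [set w | e <= i (V1 y) w - i (V1 x) w].
  have mA y : measurable (A y).
    have := measurable_fun_le measurableT (measurable_cst e)
      (measurable_realfun.measurable_funB (imeas (V1 y)) (imeas (V1 x))).
    by rewrite setTI.
  have claim : exists2 r : R, 0 < r & forall y, ball x r y -> (P (A y) < e%:E)%E.
    apply: contrapT => nC.
    have hn : forall n, exists y, ball x (harmonic n) y /\ (e%:E <= P (A y))%E.
      move=> n; apply: contrapT => nn; apply: nC; exists (harmonic n).
        exact: harmonic_gt0.
      move=> y hy; rewrite ltNge; apply/negP => hP; apply: nn; exists y; by split.
    have [ys hys] := choice hn.
    have ycvg : ys n @[n --> \oo] --> x.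
      apply/cvg_ballP => eps eps0.
      have := (cvgrPdist_lt _ _).1 (@cvg_harmonic R) eps eps0.
      case=> M _ HM; exists M => // n /HM h; apply: (le_ball _ (hys n).1); apply: ltW.
      by move: h; rewrite sub0r normrN ger0_norm // harmonic_ge0.
    have [Nn [mN PN hN]] := ae_set (Hw ys x ycvg).
    pose B m := \bigcup_(n in [set k | (m <= k)%N]) A (ys n).
    have mB m : measurable (B m) by apply: bigcup_measurable => k _; exact: mA.
    have Bdec : nonincreasing_seq B.
      move=> n m nm; apply/subsetPset => w [k /= mk Ak]; exists k => //=; exact: leq_trans nm mk.
    have capN : \bigcap_m B m `<=` Nn.
      move=> w Bw; apply: contrapT => Nw.
      have [M HM] := esup_ev e0 (hN w Nw).
      have [k /= Mk Ak] := Bw M I.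
      have := HM k Mk; rewrite /A /= in Ak; lra.
    have mcap : measurable (\bigcap_m B m).
      by apply: bigcap_measurable; [exists 0%N | move=> k _; exact: mB].
    have Pcap : P (\bigcap_m B m) = 0%E.
      apply/eqP; rewrite eq_le measure_ge0 andbT -PN; apply: le_measure => //; rewrite inE //.
    have fin0 : (P (B 0%N) < +oo)%E.
      by apply: le_lt_trans (probability_le1 _ (mB 0%N)) _; exact: ltry.
    have := nonincreasing_cvg_mu fin0 mB mcap Bdec.
    move=> cvgB0; have cvgB : (P \o B) n @[n --> \oo] --> 0%E by rewrite -Pcap.
    have := cvgB _ (@nbhs_open_ereal_lt R 0 (fun=> e) e0).
    case=> M _ HM.
    have h1 : (P (B M) < e%:E)%E := HM M (leqnn M).
    have h2 : (P (A (ys M)) <= P (B M))%E.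
      apply: le_measure; rewrite ?inE //.
      by move=> w Aw; exists M => //=.
    have := (hys M).2.
    by move=> h3; have := lt_le_trans (le_lt_trans h2 h1) h3; rewrite ltxx.
  have [r r0 Hr] := claim.
  exists (ball x r); split; first exact: nbhsx_ballx.
  move=> y hy.
  have [zz hzz] := imax (V1 y) (V1 x).
  have lezz : ae_le P i (V1 y) zz.
    by apply: aeS hzz => w /(_ I) ->; rewrite le_max lexx.
  have [hp hv] := hdec zz (V1 y) lezz.
  exists zz, (zz - V1 y); split => //.
  apply: He.
  pose S := [set w | e <= `|i zz w - i (V1 x) w|].
  have [N2 [mN2 PN2 hN2]] := ae_set hzz.
  have mS : measurable S.
    have := measurable_fun_le measurableT (measurable_cst e)
      (measurableT_comp (@measurable_realfun.normr_measurable R setT)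
      (measurable_realfun.measurable_funB (imeas zz) (imeas (V1 x)))).
    by rewrite setTI.
  apply: le_lt_trans (Hr y hy).
  apply: (@le_trans _ _ (P (A y `|` N2))).
    apply: le_measure; rewrite ?inE //; first exact: measurableU.
    move=> w Sw; case: (pselect (N2 w)) => [h|h]; first by right.
    left; have := hN2 w h I; rewrite /S /= in Sw => eq.
    rewrite eq in Sw; rewrite /A /=.
    have [ab|ab] := leP (i (V1 y) w) (i (V1 x) w).
      by move: Sw; rewrite max_r // subrr normr0 => h'; lra.
    move: Sw; rewrite max_l; last exact: ltW.
    by rewrite ger0_norm // subr_ge0 ltW.
  apply: (le_trans (measureU2 _ (mA y) mN2)); rewrite (_ : _ N2 = 0%E) ?adde0 //.

pose one : 'rV[R]_N := const_mx 1.
pose z n := x + harmonic n *: one.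
have z0 j n : z n ord0 j = x ord0 j + n.+1%:R^-1 by rewrite !mxE /= mulr1.
have zcvg : z n @[n --> \oo] --> x.
  rewrite -[X in _ --> X]addr0; apply: cvgD; first exact: cvg_cst.
  rewrite -(scale0r one); apply: cvgZ; [exact: cvg_harmonic | exact: cvg_cst].
have hx n : ae_le P i (V1 x) (V1 (z n)).
  by apply: Hmono => j; rewrite z0 lerDl invr_ge0 ler0n.
have hz n : ae_le P i (V1 (z n)) (V1 (z 0)).
  apply: Hmono => j; rewrite !z0 lerD2l lef_pV2 ?posrE ?ltr0Sn // ler_nat.
  by [].
have [a1 ha1] := iabs (V1 x).
have [a2 ha2] := iabs (V1 (z 0)).
have [s hs] := imax a1 a2.
pose Xs n := if n is k.+1 then V1 (z k) else s.
have h1 : {ae P, forall w, forall n, i (V1 x) w <= i (V1 (z n)) w}.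
  exact: ae_foralln (fun n => hx n).
have h2 : {ae P, forall w, forall n, i (V1 (z n)) w <= i (V1 (z 0)) w}.
  exact: ae_foralln (fun n => hz n).
have conv : Xs @ \oo --> V1 x.
  apply: Hoc.
    have := aeI h1 (Hw _ _ zcvg).
    apply: aeS => w [H1 H2].
    rewrite -cvg_shiftS /=.
    have hc : (fun n => (i (V1 (z n)) w)%:E) @ \oo --> (i (V1 x) w)%:E.
      by apply: limn_esup_le_cvg H2 _ => n; rewrite lee_fin.
    exact: (fine_cvg hc).
  exists s.
  apply: aeS (aeI (aeI h1 h2) (aeI hs (aeI ha1 ha2))) => w [[H1 H2] [/(_ I) Hs [Ha1 Ha2]]].
  have sge : `|i s w| = i s w.
    by rewrite ger0_norm // Hs Ha1 Ha2 le_max normr_ge0.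
  apply/eqP; rewrite eq_le; apply/andP; split.
    apply: ge_ereal_sup => _ [[|n] _ <-] /=; rewrite lee_fin.
      by rewrite sge.
    rewrite Hs Ha1 Ha2; exact: abs_between.
  by apply: ereal_sup_ubound; exists 0%N => //=; rewrite sge.
have := conv U HU; case=> M _ HM.
have UzM : U (V1 (z M)) := HM M.+1 (leqnSn M).
exists [set y | forall j, y ord0 j <= z M ord0 j]; split.
  apply/nbhs_ballP; exists (harmonic M); first exact: harmonic_gt0.
  move=> y [_ hb] j.
  have := hb ord0 j.
  rewrite -ball_normE /ball_ /= z0 => /ltr_normlP [hl hr].
  by move: hl; rewrite opprB ltrBlDr addrC => /ltW.
move=> y hy.
have [hp hv] := hdec (V1 (z M)) (V1 y) (Hmono _ _ hy).
by exists (V1 (z M)), (V1 (z M) - V1 y); split.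
Qed.
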